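(* Let $\mathcal{R}$ be any regularizer satisfying Condition 1 with constants $\alpha,\beta>0$. Then for every $\eta$ with $0<\eta<\min(\alpha/2,1/\beta)$, the FTRL mechanism $M_{\mathcal{R},\eta}$ is $(\beta+1)\eta$-approximately truthful.
   Context: Setting: $n$ forecasters, $m$ binary events with outcomes $\vec y\in\{0,1\}^m$; forecaster $i$ has beliefs $p_i\in[0,1]^m$ (believing events independent) and reports $r_i\in[0,1]^m$. A mechanism maps reports $R\in[0,1]^{n\times m}$ and outcomes $\vec y$ to a distribution $M(R,\vec y)\in\Delta_n$ over winners; $M(R;p_i)=\mathbb{E}_{\vec y\sim p_i}M(R,\vec y)$, with $y_t\sim\mathrm{Bernoulli}(p_{it})$ independently. For fixed $p_i$, report $\hat r_i$ strictly dominates $r_i$ if $M(\hat r_i,R_{-i};p_i)_i>M(r_i,R_{-i};p_i)_i$ for all $R_{-i}$; $r_i$ is undominated if no report strictly dominates it. $M$ is $\gamma$-approximately truthful if for all $p_i$: (i) an undominated report exists, and (ii) every undominated report $r_i$ satisfies $\|r_i-p_i\|_\infty\le\gamma$. Quadratic score $S(q,y)=1-(y-q)^2$. A regularizer is a strictly convex differentiable $\mathcal{R}:\Delta_n\to\mathbb{R}$ with conjugate $C(x)=\sup_{\pi\in\Delta_n}(\langle\pi,x\rangle-\mathcal{R}(\pi))$ (assumed differentiable); the FTRL mechanism is $M_{\mathcal{R},\eta}(R,\vec y)=\nabla C(\eta q)$ with $q_j=\sum_tS(r_{jt},y_t)$. Condition 1: $C$ thrice differentiable; (i) $\partial_i^2C(x)\ge\alpha|\partial_i^3C(x)|$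 for all $x,i$; (ii) $|\log(\partial_i^2C(x)/\partial_i^2C(x'))|\le\beta\|x-x'\|_\infty$ for all $x,x',i$. *)

(* Defs.v *)
From HB Require Import structures.
From mathcomp Require Import all_boot all_order all_algebra.
From mathcomp Require Import all_classical all_reals all_analysis.
Set Implicit Arguments. Unset Strict Implicit. Unset Printing Implicit Defensive.
Import Order.TTheory GRing.Theory Num.Theory.
Import numFieldNormedType.Exports.
Local Open Scope classical_set_scope.
Local Open Scope ring_scope.

Section Defs.
Variable R : realType.

Definition simplex (n : nat) : set 'rV[R]_n :=
  [set pi | (forall i, 0 <= pi ord0 i) /\ \sum_i pi ord0 i = 1].

Definition simplex_relint (n : nat) : set 'rV[R]_n :=
  [set pi | (forall i, 0 < pi ord0 i) /\ \sum_i pi ord0 i = 1].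

(** Strict convexity of Rg on Delta_n (Rg is only ever evaluated on Delta_n). *)
Definition strictly_convex_on_simplex (n : nat) (Rg : 'rV[R]_n -> R) : Prop :=
  forall p1 p2 : 'rV[R]_n, simplex p1 -> simplex p2 -> p1 <> p2 ->
  forall t : R, 0 < t < 1 ->
    Rg (t *: p1 + (1 - t) *: p2) < t * Rg p1 + (1 - t) * Rg p2.

Definition differentiable_on_simplex (n : nat) (Rg : 'rV[R]_n -> R) : Prop :=
  forall pi : 'rV[R]_n, simplex_relint pi ->
  forall v : 'rV[R]_n, \sum_i v ord0 i = 0 -> derivable Rg pi v.

Definition conjugate (n : nat) (Rg : 'rV[R]_n -> R) (x : 'rV[R]_n) : R :=
  sup [set (\sum_i pi ord0 i * x ord0 i) - Rg pi | pi in @simplex n].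

Definition partial (n : nat) (i : 'I_n) (f : 'rV[R]_n -> R) : 'rV[R]_n -> R :=
  'D_(delta_mx ord0 i) f.

Definition regularizer (n : nat) (Rg : 'rV[R]_n -> R) : Prop :=
  [/\ strictly_convex_on_simplex Rg, differentiable_on_simplex Rg
    & forall x, differentiable (conjugate Rg) x].

Definition thrice_differentiable (n : nat) (C : 'rV[R]_n -> R) : Prop :=
  [/\ forall x, differentiable C x,
      forall i x, differentiable (partial i C) x
    & forall i j x, differentiable (partial j (partial i C)) x].

Definition d2 (n : nat) (i : 'I_n) (C : 'rV[R]_n -> R) := partial i (partial i C).
Definition d3 (n : nat) (i : 'I_n) (C : 'rV[R]_n -> R) :=
  partial i (partial i (partial i C)).

(** Condition 1 (the norm on row vectors is the sup-norm). *)
Definition condition1 (n : nat) (C : 'rV[R]_n -> R) (alpha beta : R) : Prop :=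
  [/\ thrice_differentiable C,
      forall x i, alpha * `|d3 i C x| <= d2 i C x,
      forall x i, 0 < d2 i C x
    & forall x x' i, `|ln (d2 i C x / d2 i C x')| <= beta * `|x - x'|].

Definition outcome (m : nat) := {ffun 'I_m -> bool}.

Definition in_unit_cube (k m : nat) (A : 'M[R]_(k, m)) : Prop :=
  forall j t, 0 <= A j t <= 1.

Definition mechanism (n m : nat) := 'M[R]_(n, m) -> outcome m -> 'rV[R]_n.

Definition outcome_prob (m : nat) (p : 'rV[R]_m) (y : outcome m) : R :=
  \prod_t (if y t then p ord0 t else 1 - p ord0 t).

Definition expected_mech (n m : nat) (M : mechanism n m) (Rep : 'M[R]_(n, m))
  (p : 'rV[R]_m) : 'rV[R]_n :=
  \sum_(y : outcome m) outcome_prob p y *: M Rep y.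

Definition qscore (q : R) (b : bool) : R := 1 - ((b%:R : R) - q) ^+ 2.

Definition ftrl (n m : nat) (C : 'rV[R]_n -> R) (eta : R) : mechanism n m :=
  fun Rep y =>
    \row_j partial j C (eta *: \row_k (\sum_t qscore (Rep k t) (y t))).

Definition replace_row (n m : nat) (i : 'I_n) (r : 'rV[R]_m) (Rep : 'M[R]_(n, m))
  : 'M[R]_(n, m) := \matrix_(k, t) (if k == i then r ord0 t else Rep k t).

Definition strictly_dominates (n m : nat) (M : mechanism n m) (i : 'I_n)
  (p : 'rV[R]_m) (rhat r : 'rV[R]_m) : Prop :=
  forall Rep : 'M[R]_(n, m), in_unit_cube Rep ->
    expected_mech M (replace_row i r Rep) p ord0 i <
    expected_mech M (replace_row i rhat Rep) p ord0 i.

Definition undominated (n m : nat) (M : mechanism n m) (i : 'I_n)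
  (p : 'rV[R]_m) (r : 'rV[R]_m) : Prop :=
  in_unit_cube r /\
  ~ (exists rhat, in_unit_cube rhat /\ strictly_dominates M i p rhat r).

(** gamma-approximate truthfulness (norm on 'rV is the sup-norm). *)
Definition approx_truthful (n m : nat) (M : mechanism n m) (gamma : R) : Prop :=
  forall (i : 'I_n) (p : 'rV[R]_m), in_unit_cube p ->
    (exists r, undominated M i p r) /\
    (forall r, undominated M i p r -> `|r - p| <= gamma).

End Defs.

(* Main.v *)
Require Import Defs.
From HB Require Import structures.
From mathcomp Require Import all_boot all_order all_algebra.
From mathcomp Require Import all_classical all_reals all_analysis.
From mathcomp Require Import ring lra.
Import Order.TTheory GRing.Theory Num.Theory.
Import numFieldNormedType.Exports.
Local Open Scope ring_scope.

Section Aux.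
Variable R : realType.
Local Open Scope classical_set_scope.
Local Open Scope ring_scope.

Lemma expR_bound (x : R) : 0 <= x <= 1 -> expR x <= 1 + 3 * x.
Proof.
move=> /andP[x0 x1].
have e2 : expR x = expR (x/2) * expR (x/2) by rewrite -expRD; congr expR; field.
have h1 : expR (x/2) * expR (-(x/2)) = 1 by rewrite expRxMexpNx_1.
have h2 := expR_ge1Dx (-(x/2)).
have h3 := expR_gt0 (x/2).
have h4 : expR (x/2) <= 1 + x by nra.
rewrite e2; nra.
Qed.

Lemma line_derive n (F : 'rV[R]_n -> R) (X v : 'rV[R]_n) (s : R) :
  differentiable F (X + s *: v) ->
  is_derive s 1 (fun s => F (X + s *: v)) ('D_v F (X + s *: v)).
Proof.
move=> dF.
have E : (fun h : R => h^-1 *: (((fun s => F (X + s *: v)) \o shift s) (h *: 1) - F (X + s *: v)))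
  = (fun h : R => h^-1 *: ((F \o shift (X + s *: v)) (h *: v) - F (X + s *: v))).
  apply/funext => h /=; congr (_ *: (F _ - _)).
  have -> : (h%:A + s) = h + s by rewrite /GRing.scale /= mulr1.
  by rewrite scalerDl addrCA.
split; first by rewrite /derivable E; exact: diff_derivable.
by rewrite /derive E.
Qed.


Lemma mvt_line n (F : 'rV[R]_n -> R) (X v : 'rV[R]_n) (a b : R) :
  (forall x, differentiable F x) -> a < b ->
  exists2 c, a < c < b & F (X + b *: v) - F (X + a *: v) = 'D_v F (X + c *: v) * (b - a).
Proof.
move=> dF ab.
have D s := @line_derive n F X v s (dF (X + s *: v)).
have cont : {within `[a, b], continuous (fun s => F (X + s *: v))}.
  apply: continuous_subspaceT => x.
  apply: differentiable_continuous; apply/derivable1_diffP; exact: (@ex_derive _ _ _ _ _ _ _ (D x)).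
have [c cab ->] := @MVT R (fun s => F (X + s *: v)) (fun s => 'D_v F (X + s *: v)) a b ab (fun x _ => D x) cont.
by exists c; rewrite in_itv /= in cab.
Qed.

Lemma ratio_bound n (D : 'rV[R]_n -> R) (beta d : R) (P Q : 'rV[R]_n) :
  (forall x, 0 < D x) -> (forall x x', `|ln (D x / D x')| <= beta * `|x - x'|) ->
  0 <= beta -> `|P - Q| <= d -> D P <= expR (beta * d) * D Q.
Proof.
move=> Dp HL b0 PQ.
have h : ln (D P / D Q) <= beta * d.
  apply: le_trans (ler_norm _) _; apply: le_trans (HL P Q) _; exact: ler_wpM2l.
have pos : D P / D Q \in Num.pos by rewrite posrE divr_gt0.
have : D P / D Q <= expR (beta * d) by rewrite -(lnK pos) ler_expR.
by rewrite ler_pdivrMr.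
Qed.

Lemma alg1 (p x E z z' : R) : 0 <= p -> 0 <= x -> p + x <= z' -> z' < z -> z <= 1 ->
  E <= 1 + 3 * x -> p * E * (2 - z - z') < (1 - p) * (z + z').
Proof.
move=> p0 x0 h1 h2 h3 hE.
have k0 : 0 <= 2 - z - z' by lra.
have kp : p <= (z + z') / 2 by lra.
have k1a : p * (2 - z - z') <= (z + z') / 2 * (2 - z - z') by apply: ler_wpM2r.
have k1b : (z + z') / 2 * (2 - z - z') <= 1/2 by have := sqr_ge0 (z + z' - 1); nra.
have k1 : p * (2 - z - z') <= 1/2 by lra.
have k2 : 0 <= p * (2 - z - z') by nra.
have k3 : p * E * (2 - z - z') <= p * (2 - z - z') * (1 + 3 * x).
  by rewrite mulrAC; apply: ler_wpM2l.
have k4 : x * (p * (2 - z - z')) <= x * (1/2) by apply: ler_wpM2l.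
nra.
Qed.

Lemma alg2 (p x E z z' : R) : p <= 1 -> 0 <= x -> 0 <= z -> z < z' -> z' <= p - x ->
  E <= 1 + 3 * x -> (1 - p) * E * (z + z') < p * (2 - z - z').
Proof.
move=> p1 x0 h1 h2 h3 hE.
have k0 : 0 <= z + z' by lra.
have kp : 1 - p <= 1 - (z + z') / 2 by lra.
have k1a : (1 - p) * (z + z') <= (1 - (z + z') / 2) * (z + z') by apply: ler_wpM2r.
have k1b : (1 - (z + z') / 2) * (z + z') <= 1/2 by have := sqr_ge0 (z + z' - 1); nra.
have k1 : (1 - p) * (z + z') <= 1/2 by lra.
have k2 : 0 <= (1 - p) * (z + z') by nra.
have k3 : (1 - p) * E * (z + z') <= (1 - p) * (z + z') * (1 + 3 * x).
  by rewrite mulrAC; apply: ler_wpM2l.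
have k4 : x * ((1 - p) * (z + z')) <= x * (1/2) by apply: ler_wpM2l.
nra.
Qed.


Lemma key n (F D : 'rV[R]_n -> R) (v X1 X0 : 'rV[R]_n) (eta beta p z z' : R) :
  (forall x, differentiable F x) ->
  (forall x, 'D_v F x = eta * D x) ->
  (forall x, 0 < D x) ->
  (forall x x', `|ln (D x / D x')| <= beta * `|x - x'|) ->
  (forall a b, 0 <= a <= 1 -> 0 <= b <= 1 -> `|(X1 + a *: v) - (X0 + b *: v)| <= eta) ->
  0 < eta -> 0 < beta -> beta * eta <= 1 -> 0 <= p <= 1 ->
  (p + (beta + 1) * eta <= z' /\ z' < z /\ z <= 1) \/
  (0 <= z /\ z < z' /\ z' <= p - (beta + 1) * eta) ->
  p * F (X1 + (1 - (1 - z) ^+ 2) *: v) + (1 - p) * F (X0 + (1 - z ^+ 2) *: v) <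
  p * F (X1 + (1 - (1 - z') ^+ 2) *: v) + (1 - p) * F (X0 + (1 - z' ^+ 2) *: v).
Proof.
move=> dF dD Dp HL Hd e0 b0 be1 /andP[p0 p1] H.
set E := expR (beta * eta).
have x0 : 0 <= beta * eta by rewrite mulr_ge0 // ltW.
have hE : E <= 1 + 3 * (beta * eta) by apply: expR_bound; rewrite be1 andbT.
have R10 c1 c2 : 0 <= c1 <= 1 -> 0 <= c2 <= 1 -> D (X1 + c1 *: v) <= E * D (X0 + c2 *: v).
  move=> h1 h2; apply: ratio_bound => //; [exact: ltW | exact: Hd].
have R01 c1 c2 : 0 <= c1 <= 1 -> 0 <= c2 <= 1 -> D (X0 + c2 *: v) <= E * D (X1 + c1 *: v).
  move=> h1 h2; apply: ratio_bound => //; [exact: ltW | rewrite distrC; exact: Hd].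
have ge : beta * eta <= (beta + 1) * eta by rewrite mulrDl mul1r lerDl ltW.
case: H => [[h1 [h2 h3]] | [h1 [h2 h3]]].
- have ha : 1 - (1 - z') ^+ 2 < 1 - (1 - z) ^+ 2 by nra.
  have hb : 1 - z ^+ 2 < 1 - z' ^+ 2 by nra.
  have [c1 /andP[c1a c1b] E1] := @mvt_line n F X1 v _ _ dF ha.
  have [c2 /andP[c2a c2b] E2] := @mvt_line n F X0 v _ _ dF hb.
  rewrite !dD in E1 E2.
  have c1r : 0 <= c1 <= 1 by apply/andP; split; nra.
  have c2r : 0 <= c2 <= 1 by apply/andP; split; nra.
  have A := R10 c1 c2 c1r c2r.
  have Bp : 0 < D (X0 + c2 *: v) := Dp _.
  have k0 := @alg1 p (beta * eta) E z z' p0 x0 (_ : p + beta * eta <= z') h2 h3 hE.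
  have k1 : p * D (X1 + c1 *: v) * (2 - z - z') < (1 - p) * D (X0 + c2 *: v) * (z + z').
    have l1 : p * D (X1 + c1 *: v) * (2 - z - z') <= p * (E * D (X0 + c2 *: v)) * (2 - z - z').
      by apply: ler_wpM2r; [lra | apply: ler_wpM2l].
    have l2 : p * E * (2 - z - z') * D (X0 + c2 *: v) < (1 - p) * (z + z') * D (X0 + c2 *: v).
      by rewrite ltr_pM2r //; apply: k0; lra.
    lra.
  have k2 : eta * (z - z') * (p * D (X1 + c1 *: v) * (2 - z - z')) <
            eta * (z - z') * ((1 - p) * D (X0 + c2 *: v) * (z + z')).
    by rewrite ltr_pM2l // mulr_gt0 // subr_gt0.
  have e1 : F (X1 + (1 - (1 - z) ^+ 2) *: v) = F (X1 + (1 - (1 - z') ^+ 2) *: v) +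
     eta * D (X1 + c1 *: v) * ((1 - (1 - z) ^+ 2) - (1 - (1 - z') ^+ 2)) by rewrite -E1; ring.
  have e2 : F (X0 + (1 - z' ^+ 2) *: v) = F (X0 + (1 - z ^+ 2) *: v) +
     eta * D (X0 + c2 *: v) * ((1 - z' ^+ 2) - (1 - z ^+ 2)) by rewrite -E2; ring.
  rewrite e1 e2; lra.
- have ha : 1 - (1 - z) ^+ 2 < 1 - (1 - z') ^+ 2 by nra.
  have hb : 1 - z' ^+ 2 < 1 - z ^+ 2 by nra.
  have [c1 /andP[c1a c1b] E1] := @mvt_line n F X1 v _ _ dF ha.
  have [c2 /andP[c2a c2b] E2] := @mvt_line n F X0 v _ _ dF hb.
  rewrite !dD in E1 E2.
  have c1r : 0 <= c1 <= 1 by apply/andP; split; nra.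
  have c2r : 0 <= c2 <= 1 by apply/andP; split; nra.
  have A := R01 c1 c2 c1r c2r.
  have Bp : 0 < D (X1 + c1 *: v) := Dp _.
  have k0 := @alg2 p (beta * eta) E z z' p1 x0 h1 h2 (_ : z' <= p - beta * eta) hE.
  have k1 : (1 - p) * D (X0 + c2 *: v) * (z + z') < p * D (X1 + c1 *: v) * (2 - z - z').
    have l1 : (1 - p) * D (X0 + c2 *: v) * (z + z') <= (1 - p) * (E * D (X1 + c1 *: v)) * (z + z').
      by apply: ler_wpM2r; [lra | apply: ler_wpM2l; lra].
    have l2 : (1 - p) * E * (z + z') * D (X1 + c1 *: v) < p * (2 - z - z') * D (X1 + c1 *: v).
      by rewrite ltr_pM2r //; apply: k0; lra.
    lra.
  have k2 : eta * (z' - z) * ((1 - p) * D (X0 + c2 *: v) * (z + z')) <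
            eta * (z' - z) * (p * D (X1 + c1 *: v) * (2 - z - z')).
    by rewrite ltr_pM2l // mulr_gt0 // subr_gt0.
  have e1 : F (X1 + (1 - (1 - z') ^+ 2) *: v) = F (X1 + (1 - (1 - z) ^+ 2) *: v) +
     eta * D (X1 + c1 *: v) * ((1 - (1 - z') ^+ 2) - (1 - (1 - z) ^+ 2)) by rewrite -E1; ring.
  have e2 : F (X0 + (1 - z ^+ 2) *: v) = F (X0 + (1 - z' ^+ 2) *: v) +
     eta * D (X0 + c2 *: v) * ((1 - z ^+ 2) - (1 - z' ^+ 2)) by rewrite -E2; ring.
  rewrite e1 e2; lra.
Qed.

End Aux.

Section Comb.
Variable R : realType.
Local Open Scope classical_set_scope.
Local Open Scope ring_scope.

Lemma rV_norm_le n (x : 'rV[R]_n) (d : R) : 0 <= d -> (forall j, `|x ord0 j| <= d) -> `|x| <= d.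
Proof.
move=> d0 h.
have -> : `|x| = mx_norm x by [].
rewrite mx_normrE; apply: bigmax_le => // ij _.
by rewrite (ord1 ij.1); exact: h.
Qed.

Definition flip m (t : 'I_m) (y : outcome m) : outcome m :=
  [ffun t' => if t' == t then ~~ y t' else y t'].
Arguments flip {m}.


Lemma flipK m (t : 'I_m) : involutive (@flip m t).
Proof.
move=> y; apply/ffunP => t'; rewrite !ffunE; case: eqP => // _; exact: negbK.
Qed.

Lemma flip_t m (t : 'I_m) y : flip t y t = ~~ y t.
Proof. by rewrite ffunE eqxx. Qed.

Lemma flip_nt m (t t' : 'I_m) y : t' != t -> flip t y t' = y t'.
Proof. by rewrite ffunE => /negbTE ->. Qed.

Lemma pair_sum m (t : 'I_m) (f : outcome m -> R) :
  \sum_(y : outcome m) f y = \sum_(y : outcome m) (if y t then f y + f (flip t y) else 0).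
Proof.
rewrite (bigID (fun y : outcome m => y t)) /= -big_mkcond /= big_split /=; congr (_ + _).
rewrite (reindex_inj (inv_inj (@flipK m t))) /=.
by apply: eq_bigl => y; rewrite flip_t negbK.
Qed.

Definition pi_rest m (p : 'rV[R]_m) (t : 'I_m) (y : outcome m) : R :=
  \prod_(t' | t' != t) (if y t' then p ord0 t' else 1 - p ord0 t').
Arguments pi_rest {m}.


Lemma prob_split m (p : 'rV[R]_m) t y :
  outcome_prob p y = (if y t then p ord0 t else 1 - p ord0 t) * pi_rest p t y.
Proof. by rewrite /outcome_prob (bigD1 t). Qed.

Lemma pi_rest_flip m (p : 'rV[R]_m) t y : pi_rest p t (flip t y) = pi_rest p t y.
Proof. by apply: eq_bigr => t' h; rewrite flip_nt. Qed.

Lemma pi_rest_ge0 m (p : 'rV[R]_m) t y : in_unit_cube p -> 0 <= pi_rest p t y.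
Proof.
move=> hp; apply: prodr_ge0 => t' _.
have /andP[h0 h1] := hp ord0 t'; case: (y t') => //; by rewrite subr_ge0.
Qed.

Lemma prob_sum m (p : 'rV[R]_m) : \sum_(y : outcome m) outcome_prob p y = 1.
Proof.
rewrite /outcome_prob.
have := @bigA_distr_bigA R 0 1 *%R +%R 'I_m bool (fun t b => if b then p ord0 t else 1 - p ord0 t).
move=> <-.
rewrite big1 // => t _.
by rewrite big_bool /= addrC subrK.
Qed.

Lemma pi_sum m (p : 'rV[R]_m) t : \sum_(y : outcome m | y t) pi_rest p t y = 1.
Proof.
rewrite -(@prob_sum m p) (@pair_sum m t) -big_mkcond /=.
apply: eq_bigr => y yt.
rewrite !(@prob_split m p t) pi_rest_flip flip_t yt /=.
ring.
Qed.

Lemma pos_comb (T : finType) (P : pred T) (w K : T -> R) :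
  (forall y, 0 <= w y) -> 0 < \sum_(y | P y) w y -> (forall y, P y -> 0 < K y) ->
  0 < \sum_(y | P y) w y * K y.
Proof.
move=> w0 ws Kp.
have ge : forall y, P y -> 0 <= w y * K y by move=> y Py; rewrite mulr_ge0 // ltW // Kp.
rewrite lt_neqAle sumr_ge0 // andbT eq_sym; apply/eqP => H.
have := psumr_eq0P ge H => h.
have : \sum_(y | P y) w y = 0.
  apply: big1 => y Py; have /eqP := h y Py.
  by rewrite mulf_eq0 (gt_eqF (Kp y Py)) orbF => /eqP.
by move=> E; rewrite E ltxx in ws.
Qed.

End Comb.
Arguments flip {m}.
Arguments pi_rest {R m}.

Section Dec.
Variable R : realType.
Local Open Scope classical_set_scope.
Local Open Scope ring_scope.

Definition setr m (r : 'rV[R]_m) (t : 'I_m) (z : R) : 'rV[R]_m :=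
  \row_t' (if t' == t then z else r ord0 t').
Arguments setr {m}.

Definition base n m (eta : R) (i : 'I_n) (r : 'rV[R]_m) (Rep : 'M[R]_(n, m)) (t : 'I_m)
  (y : outcome m) : 'rV[R]_n :=
  eta *: \row_k (\sum_t' (if (k == i) && (t' == t) then 0
                          else qscore (replace_row i r Rep k t') (y t'))).
Arguments base {n m}.

Lemma replace_rowE n m (i : 'I_n) (r : 'rV[R]_m) Rep k t :
  replace_row i r Rep k t = if k == i then r ord0 t else Rep k t.
Proof. by rewrite mxE. Qed.

Lemma decomp n m (eta : R) (i : 'I_n) (r : 'rV[R]_m) (Rep : 'M[R]_(n, m)) t z (y : outcome m) :
  eta *: \row_k (\sum_t' qscore (replace_row i (setr r t z) Rep k t') (y t')) =
  base eta i r Rep t y + qscore z (y t) *: (eta *: delta_mx ord0 i).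
Proof.
apply/rowP => k; rewrite !mxE.
under eq_bigr => t' _ do rewrite replace_rowE mxE.
under [X in _ = eta * X + _]eq_bigr => t' _ do rewrite replace_rowE.
case: (eqVneq k i) => [eki|kni].
- subst k.
  rewrite eqxx /= mulr1 [in LHS](bigD1 t) //= [in RHS](bigD1 t) //= eqxx add0r mulrDr addrC.
  rewrite [qscore z (y t) * eta]mulrC; congr (_ + _); congr (_ * _).
  by apply: eq_bigr => t' /negbTE ->.
- by rewrite andbF /= mulr0 mulr0 addr0.
Qed.

Lemma base_dist n m (eta : R) (i : 'I_n) (r : 'rV[R]_m) (Rep : 'M[R]_(n, m)) t (y : outcome m) a b :
  0 < eta -> in_unit_cube Rep -> y t -> 0 <= a <= 1 -> 0 <= b <= 1 ->
  `|(base eta i r Rep t y + a *: (eta *: delta_mx ord0 i)) -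
    (base eta i r Rep t (flip t y) + b *: (eta *: delta_mx ord0 i))| <= eta.
Proof.
move=> e0 hR yt /andP[a0 a1] /andP[b0 b1].
apply: rV_norm_le; first exact: ltW.
move=> k; rewrite !mxE.
case: (eqVneq k i) => [->|kni].
- rewrite eqxx /= mulr1.
  have -> : \sum_t' (if t' == t then 0 else qscore (replace_row i r Rep i t') (flip t y t')) =
            \sum_t' (if t' == t then 0 else qscore (replace_row i r Rep i t') (y t')).
    by apply: eq_bigr => t' _; case: eqP => // /eqP h; rewrite flip_nt.
  set S := \sum_t' _.
  have -> : eta * S + a * eta - (eta * S + b * eta) = eta * (a - b) by ring.
  rewrite normrM ger0_norm ?(ltW e0) // ger_pMr // ler_norml; apply/andP; split; lra.
- rewrite /= !mulr0 !addr0.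
  rewrite (bigD1 t) //= (bigD1 (P := predT) t) //= flip_t yt /=.
  have -> : \sum_(t' | t' != t) qscore (replace_row i r Rep k t') (flip t y t') =
            \sum_(t' | t' != t) qscore (replace_row i r Rep k t') (y t').
    by apply: eq_bigr => t' h; rewrite flip_nt.
  set S := \sum_(t' | _) _.
  rewrite /qscore replace_rowE (negbTE kni) /=.
  have /andP[c0 c1] := hR k t.
  have -> : eta * (1 - (1%:R - Rep k t) ^+ 2 + S) - eta * (1 - (0%:R - Rep k t) ^+ 2 + S) = eta * (2 * Rep k t - 1).
    by rewrite /= mulr1n; ring.
  rewrite normrM ger0_norm ?(ltW e0) // ger_pMr // ler_norml.
  apply/andP; split; lra.
Qed.

End Dec.

Arguments key {R}. Arguments rV_norm_le {R}. Arguments pair_sum {R}. Arguments prob_split {R}.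
Arguments pi_rest_flip {R}. Arguments pi_rest_ge0 {R}. Arguments pi_sum {R}. Arguments pos_comb {R}.
Arguments setr {R m}. Arguments base {R n m}. Arguments decomp {R}. Arguments base_dist {R}.
Arguments replace_rowE {R}. Arguments flip_t {m}. Arguments flip_nt {m}.

Section Main.
Variable R : realType.
Local Open Scope classical_set_scope.
Local Open Scope ring_scope.

Lemma payoffE n m (C : 'rV[R]_n -> R) eta (Rep : 'M[R]_(n,m)) p i :
  expected_mech (ftrl C eta) Rep p ord0 i =
  \sum_(y : outcome m) outcome_prob p y *
     partial i C (eta *: \row_k (\sum_t qscore (Rep k t) (y t))).
Proof. by rewrite /expected_mech summxE; apply: eq_bigr => y _; rewrite !mxE. Qed.

Lemma qT (z : R) : qscore z true = 1 - (1 - z) ^+ 2.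
Proof. by rewrite /qscore /= mulr1n. Qed.

Lemma qF (z : R) : qscore z false = 1 - z ^+ 2.
Proof. by rewrite /qscore /= mulr0n sub0r sqrrN. Qed.

Lemma dominate n m (C : 'rV[R]_n -> R) (eta beta : R) (i : 'I_n) (p r : 'rV[R]_m)
    (t : 'I_m) (z' : R) :
  (forall x, differentiable (partial i C) x) ->
  (forall x, 0 < d2 i C x) ->
  (forall x x', `|ln (d2 i C x / d2 i C x')| <= beta * `|x - x'|) ->
  0 < eta -> 0 < beta -> beta * eta <= 1 -> in_unit_cube p ->
  (p ord0 t + (beta + 1) * eta <= z' /\ z' < r ord0 t /\ r ord0 t <= 1) \/
  (0 <= r ord0 t /\ r ord0 t < z' /\ z' <= p ord0 t - (beta + 1) * eta) ->
  strictly_dominates (ftrl C eta) i p (setr r t z') r.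
Proof.
move=> dF Dp HL e0 b0 be hp H Rep hRep.
pose v : 'rV[R]_n := eta *: delta_mx ord0 i.
have rE : r = setr r t (r ord0 t) by apply/rowP => t'; rewrite mxE; case: eqP => // ->.
have -> : replace_row i r Rep = replace_row i (setr r t (r ord0 t)) Rep by rewrite -rE.
have dD x : 'D_v (partial i C) x = eta * d2 i C x.
  have -> : d2 i C x = 'D_(delta_mx ord0 i) (partial i C) x by [].
  by rewrite /v !deriveE // linearZ.
rewrite !payoffE.
pose G := fun z (y : outcome m) => partial i C (base eta i r Rep t y + qscore z (y t) *: v).
have hz z : \sum_(y : outcome m) outcome_prob p y *
     partial i C (eta *: \row_k (\sum_t0 qscore (replace_row i (setr r t z) Rep k t0) (y t0))) =
   \sum_(y : outcome m) outcome_prob p y * G z y.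
  by apply: eq_bigr => y _; rewrite decomp.
have /andP[p0 p1] := hp ord0 t.
have Kpos (y : outcome m) : y t -> p ord0 t * G (r ord0 t) y + (1 - p ord0 t) * G (r ord0 t) (flip t y) <
    p ord0 t * G z' y + (1 - p ord0 t) * G z' (flip t y).
  move=> yt; rewrite /G yt flip_t yt /= !qT !qF.
  apply: (key n (partial i C) (d2 i C) v (base eta i r Rep t y) (base eta i r Rep t (flip t y))
    eta beta (p ord0 t) (r ord0 t) z' dF dD Dp HL _ e0 b0 be _ H).
  - by move=> a b ha hb; apply: base_dist.
  - by rewrite p0 p1.
suff S : \sum_(y : outcome m) outcome_prob p y * G (r ord0 t) y <
         \sum_(y : outcome m) outcome_prob p y * G z' y.
  by move: S; rewrite -(hz z') -(hz (r ord0 t)).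
clearbody G.
rewrite -subr_gt0 -sumrB (pair_sum _ t) -big_mkcond.
pose K := fun y : outcome m => (p ord0 t * G z' y + (1 - p ord0 t) * G z' (flip t y)) -
                  (p ord0 t * G (r ord0 t) y + (1 - p ord0 t) * G (r ord0 t) (flip t y)).
have -> : \sum_(y : outcome m | y t) (outcome_prob p y * G z' y - outcome_prob p y * G (r ord0 t) y +
     (outcome_prob p (flip t y) * G z' (flip t y) -
      outcome_prob p (flip t y) * G (r ord0 t) (flip t y))) =
   \sum_(y : outcome m | y t) pi_rest p t y * K y.
  apply: eq_bigr => y yt.
  rewrite !(prob_split _ p t) pi_rest_flip flip_t yt /= /K; ring.
apply: pos_comb.
- by move=> y; exact: pi_rest_ge0.
- by rewrite pi_sum ltr01.
by move=> y yt; rewrite /K subr_gt0; apply: Kpos.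
Qed.

End Main.

Arguments key {R}. Arguments rV_norm_le {R}. Arguments pair_sum {R}. Arguments prob_split {R}.
Arguments pi_rest_flip {R}. Arguments pi_rest_ge0 {R}. Arguments pi_sum {R}. Arguments pos_comb {R}.
Arguments setr {R m}. Arguments base {R n m}. Arguments decomp {R}. Arguments base_dist {R}.
Arguments replace_rowE {R}. Arguments flip_t {m}. Arguments flip_nt {m}.
Arguments payoffE {R}. Arguments dominate {R}.

Section Ex.
Variable R : realType.
Local Open Scope classical_set_scope.
Local Open Scope ring_scope.

Lemma diff_sum_seq (V W : normedModType R) (T : Type) (s : seq T) (P : pred T)
  (f : T -> V -> W) (x : V) :
  (forall y, differentiable (f y) x) -> differentiable (fun r => \sum_(y <- s | P y) f y r) x.
Proof.
move=> h; elim: s => [|a s IH].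
  have -> : (fun r => \sum_(y <- [::] | P y) f y r) = cst 0 by apply/funext => r; rewrite big_nil.
  exact: differentiable_cst.
case: (boolP (P a)) => Pa.
  have -> : (fun r => \sum_(y <- a :: s | P y) f y r) = f a + (fun r => \sum_(y <- s | P y) f y r).
    by apply/funext => r; rewrite big_cons Pa.
  exact: differentiableD.
have -> : (fun r => \sum_(y <- a :: s | P y) f y r) = (fun r => \sum_(y <- s | P y) f y r).
  by apply/funext => r; rewrite big_cons (negbTE Pa).
exact: IH.
Qed.

Lemma diff_mulc (V : normedModType R) (c : R) (g : V -> R) x :
  differentiable g x -> differentiable (fun r => c * g r) x.
Proof.
move=> dg; have -> : (fun r => c * g r) = c *: g by apply/funext.
exact: differentiableZ.
Qed.

Lemma diff_qs m (t : 'I_m) (b : bool) (x : 'rV[R]_m) :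
  differentiable (fun r : 'rV[R]_m => qscore (r ord0 t) b) x.
Proof.
pose h := cst (b%:R : R) - (fun r : 'rV[R]_m => r ord0 t).
have -> : (fun r : 'rV[R]_m => qscore (r ord0 t) b) = cst 1 - h * h.
  by apply/funext => r; rewrite /qscore expr2.
apply: differentiableB; first exact: differentiable_cst.
have dh : differentiable h x.
  apply: differentiableB; first exact: differentiable_cst.
  exact: differentiable_coord.
exact: differentiableM.
Qed.

Lemma diff_Phi n m (eta : R) (i : 'I_n) (y : outcome m) (x : 'rV[R]_m) :
  differentiable (fun r : 'rV[R]_m =>
    eta *: \row_k (\sum_t qscore (replace_row i r 0 k t) (y t)) : 'rV[R]_n) x.
Proof.
have -> : (fun r : 'rV[R]_m => eta *: \row_k (\sum_t qscore (replace_row i r 0 k t) (y t)) : 'rV[R]_n) =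
   eta *: (fun r : 'rV[R]_m => \sum_(k < n) (\sum_t qscore (replace_row i r 0 k t) (y t)) *: 'e_k).
  apply/funext => r /=; congr (_ *: _).
  rewrite [LHS]row_sum_delta; apply: eq_bigr => k _; by rewrite mxE.
apply: differentiableZ; apply: diff_sum_seq => k /=.
apply: differentiableZl; apply: diff_sum_seq => t /=.
case: (eqVneq k i) => [eki|kni].
  subst k.
  have -> : (fun r : 'rV[R]_m => qscore (replace_row i r 0 i t) (y t)) =
            (fun r : 'rV[R]_m => qscore (r ord0 t) (y t)).
    by apply/funext => r; rewrite replace_rowE eqxx.
  exact: diff_qs.
have -> : (fun r : 'rV[R]_m => qscore (replace_row i r 0 k t) (y t)) =
          cst (qscore ((0 : 'M[R]_(n, m)) k t) (y t)).
  by apply/funext => r; rewrite replace_rowE (negbTE kni).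
exact: differentiable_cst.
Qed.

End Ex.

Arguments key {R}. Arguments rV_norm_le {R}. Arguments pair_sum {R}. Arguments prob_split {R}.
Arguments pi_rest_flip {R}. Arguments pi_rest_ge0 {R}. Arguments pi_sum {R}. Arguments pos_comb {R}.
Arguments setr {R m}. Arguments base {R n m}. Arguments decomp {R}. Arguments base_dist {R}.
Arguments replace_rowE {R}. Arguments flip_t {m}. Arguments flip_nt {m}.
Arguments payoffE {R}. Arguments dominate {R}.
Arguments diff_sum_seq {R}. Arguments diff_mulc {R}. Arguments diff_Phi {R}.

Section Fin.
Variable R : realType.
Local Open Scope classical_set_scope.
Local Open Scope ring_scope.

Lemma exists_undom n m (C : 'rV[R]_n -> R) (eta : R) (i : 'I_n) (p : 'rV[R]_m) :
  (forall x, differentiable (partial i C) x) ->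
  exists r, undominated (ftrl (m := m) C eta) i p r.
Proof.
move=> dF.
pose A := [set r : 'rV[R]_m | in_unit_cube r].
pose u := fun r : 'rV[R]_m => expected_mech (ftrl C eta) (replace_row i r 0) p ord0 i.
have A0 : A (0 : 'rV[R]_m) by move=> j t; rewrite mxE lexx ler01.
have Ac : compact A.
  have -> : A = [set v : 'rV[R]_m | forall j, `[0, 1]%classic (v ord0 j)].
    apply/seteqP; split => x /= h.
    - by move=> j; have := h ord0 j; rewrite /= in_itv.
    - by move=> j t; rewrite (ord1 j); have := h t; rewrite /= in_itv.
  by apply: (@rV_compact R m (fun=> `[0, 1]%classic)) => j; exact: segment_compact.
have uc : {within A, continuous u}.
  apply: continuous_subspaceT => r; apply: differentiable_continuous.
  have -> : u = fun r => \sum_(y : outcome m) outcome_prob p y *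
      partial i C (eta *: \row_k (\sum_t qscore (replace_row i r 0 k t) (y t))).
    by apply/funext => r'; rewrite /u payoffE.
  apply: diff_sum_seq => y /=.
  apply: diff_mulc.
  exact: (differentiable_comp (diff_Phi _ _ _ _ _ _) (dF _)).
have [c cA cmax] := compact_EVT_max (ex_intro _ _ A0) Ac uc.
exists c; split; first by rewrite inE in cA.
move=> [rhat [hrhat hdom]].
have h1 := hdom 0 (fun j t => ltac:(by rewrite mxE lexx ler01)).
have h2 := cmax rhat (mem_set hrhat).
by move: h1; rewrite ltNge h2.
Qed.


Lemma main_lemma (n m : nat) (Rg : 'rV[R]_n -> R) (alpha beta eta : R) :
  0 < alpha -> 0 < beta ->
  regularizer Rg -> condition1 (conjugate Rg) alpha beta ->
  0 < eta -> eta < Num.min (alpha / 2) (1 / beta) ->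
  approx_truthful (ftrl (m := m) (conjugate Rg) eta) ((beta + 1) * eta).
Proof.
move=> a0 b0 _ [[dC dF ddF] _ Dp HL] e0 hmin.
have be : beta * eta <= 1.
  move: hmin; rewrite lt_min => /andP[_ h].
  have : beta * eta < beta * (1 / beta) by rewrite ltr_pM2l.
  rewrite mul1r mulfV ?gt_eqF //; exact: ltW.
move=> i p hp; split; first exact: exists_undom (dF i).
move=> r [hr hnd].
have g0 : 0 < (beta + 1) * eta by rewrite mulr_gt0 // addr_gt0.
apply: rV_norm_le; first exact: ltW.
move=> t; rewrite !mxE.
rewrite leNgt; apply/negP => hlt.
have /andP[p0 p1] := hp ord0 t; have /andP[r0 r1] := hr ord0 t.
apply: hnd.
move: hlt; rewrite ltr_normr => /orP[h|h].
- exists (setr r t (p ord0 t + (beta + 1) * eta)); split.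
    move=> j t'; rewrite (ord1 j) mxE; case: eqP => _; last exact: hr.
    apply/andP; split; lra.
  apply: (dominate n m (conjugate Rg) eta beta i p r t _ (dF i) (fun x => Dp x i)
    (fun x x' => HL x x' i) e0 b0 be hp).
  left; split; [lra | split; lra].
- exists (setr r t (p ord0 t - (beta + 1) * eta)); split.
    move=> j t'; rewrite (ord1 j) mxE; case: eqP => _; last exact: hr.
    apply/andP; split; lra.
  apply: (dominate n m (conjugate Rg) eta beta i p r t _ (dF i) (fun x => Dp x i)
    (fun x x' => HL x x' i) e0 b0 be hp).
  right; split; [lra | split; lra].
Qed.

End Fin.


Theorem mainTheorem7 (R : realType) (n m : nat) (Rg : 'rV[R]_n -> R)
  (alpha beta eta : R) :
  0 < alpha -> 0 < beta ->
  regularizer Rg -> condition1 (conjugate Rg) alpha beta ->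
  0 < eta -> eta < Num.min (alpha / 2) (1 / beta) ->
  approx_truthful (ftrl (m := m) (conjugate Rg) eta) ((beta + 1) * eta).
Proof. exact: main_lemma. Qed.
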